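(* Let $A\subseteq B$ be a ring extension (commutative rings with identity) such that every finitely generated $B$-regular ideal of $A$ is $B$-invertible (i.e. $A$ is almost Prüfer in $B$). Then the following conditions are equivalent: (i) every $B$-regular and locally principal ideal of $A$ is $B$-invertible; (ii) the extension $A\subseteq B$ has the finite character, i.e. every $B$-regular ideal of $A$ is contained in only finitely many maximal ideals of $A$.
   Context: For an $A$-submodule $S$ of $B$: $S$ is $B$-regular if $SB=B$; $S$ is $B$-invertible if there is an $A$-submodule $U$ of $B$ with $SU=A$. An ideal $\mathfrak a$ of $A$ is locally principal if $\mathfrak aA_{\mathfrak m}$ is principal for every maximal ideal $\mathfrak m$ of $A$. *)

(* Defs.v *)
From HB Require Import structures.
From mathcomp Require Import all_boot all_order all_algebra.
From mathcomp Require Import boolp classical_sets cardinality.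
Set Implicit Arguments. Unset Strict Implicit. Unset Printing Implicit Defensive.
Import GRing.Theory.
Local Open Scope ring_scope.
Local Open Scope classical_set_scope.

Definition is_subring (B : comPzRingType) (A : set B) : Prop :=
  A 1 /\ (forall x y, A x -> A y -> A (x - y)) /\ (forall x y, A x -> A y -> A (x * y)).

Definition Asubmod (B : comPzRingType) (A : set B) (S : set B) : Prop :=
  S 0 /\ (forall x y, S x -> S y -> S (x + y)) /\
  (forall a x, A a -> S x -> S (a * x)).

Definition ideal (B : comPzRingType) (A : set B) (I : set B) : Prop :=
  Asubmod A I /\ I `<=` A.

Definition prodmod (B : comPzRingType) (S U : set B) : set B :=
  [set z | exists n (s u : 'I_n -> B),
     (forall i, S (s i) /\ U (u i)) /\ z = \sum_(i < n) s i * u i].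

Definition Bregular (B : comPzRingType) (S : set B) : Prop :=
  prodmod S [set: B] = [set: B].

Definition Binvertible (B : comPzRingType) (A : set B) (S : set B) : Prop :=
  exists U : set B, Asubmod A U /\ prodmod S U = A.

Definition maximal_ideal (B : comPzRingType) (A : set B) (m : set B) : Prop :=
  ideal A m /\ ~ m 1 /\
  (forall J, ideal A J -> m `<=` J -> ~ J 1 -> J = m).

Definition fin_gen (B : comPzRingType) (A : set B) (I : set B) : Prop :=
  exists n (g : 'I_n -> B), (forall i, A (g i)) /\
    I = [set z | exists c : 'I_n -> B,
                   (forall i, A (c i)) /\ z = \sum_(i < n) c i * g i].

(* I A_m is principal: unfolding of the localization, I A_m = (a/1) A_m for
   some a in I, i.e. every x in I satisfies x/1 = (r/s)(a/1) in A_m. *)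
Definition principal_at (B : comPzRingType) (A : set B) (I m : set B) : Prop :=
  exists a, I a /\
    forall x, I x -> exists s r, [/\ A s, ~ m s, A r & s * x = r * a].

Definition locally_principal (B : comPzRingType) (A : set B) (I : set B) : Prop :=
  forall m, maximal_ideal A m -> principal_at A I m.

Definition almost_Prufer (B : comPzRingType) (A : set B) : Prop :=
  forall I, ideal A I -> fin_gen A I -> Bregular I -> Binvertible A I.

Definition finite_character (B : comPzRingType) (A : set B) : Prop :=
  forall I, ideal A I -> Bregular I ->
    finite_set [set m | maximal_ideal A m /\ I `<=` m].

(* Main.v *)
Require Import Defs.
From HB Require Import structures.
From mathcomp Require Import all_boot all_order all_algebra.
From mathcomp Require Import boolp classical_sets cardinality.
Set Implicit Arguments. Unset Strict Implicit. Unset Printing Implicit Defensive.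
Import GRing.Theory.
Local Open Scope ring_scope.
Local Open Scope classical_set_scope.
From mathcomp Require Import ring.

Lemma not_sub (T : Type) (S U : set T) : ~ (S `<=` U) -> exists x, S x /\ ~ U x.
Proof.
move=> h; apply: contrapT => h2; apply: h => x Sx; apply: contrapT => Ux.
by apply: h2; exists x.
Qed.

Lemma A1 (B : comPzRingType) (A : set B) (hA : is_subring A) : A 1. Proof. by case: hA. Qed.
Lemma AB (B : comPzRingType) (A : set B) (hA : is_subring A) x y : A x -> A y -> A (x - y).
Proof. by case: hA => _ [h _]; apply: h. Qed.
Lemma AM (B : comPzRingType) (A : set B) (hA : is_subring A) x y : A x -> A y -> A (x * y).
Proof. by case: hA => _ [_ h]; apply: h. Qed.
Lemma A0 (B : comPzRingType) (A : set B) (hA : is_subring A) : A 0.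
Proof. by rewrite -(subrr 1); apply: (AB hA); apply: A1. Qed.
Lemma AN (B : comPzRingType) (A : set B) (hA : is_subring A) x : A x -> A (- x).
Proof. by move=> h; rewrite -sub0r; apply: (AB hA) => //; apply: A0. Qed.
Lemma AD (B : comPzRingType) (A : set B) (hA : is_subring A) x y : A x -> A y -> A (x + y).
Proof. by move=> hx hy; rewrite -(opprK y); apply: (AB hA) => //; apply: AN. Qed.
Lemma A_sum (B : comPzRingType) (A : set B) (hA : is_subring A) n (F : 'I_n -> B) :
  (forall i, A (F i)) -> A (\sum_(i < n) F i).
Proof. by move=> h; elim/big_ind: _ => //; [apply: A0|apply: AD]. Qed.

Lemma sm0 (B : comPzRingType) (A S : set B) : Asubmod A S -> S 0. Proof. by case. Qed.
Lemma smD (B : comPzRingType) (A S : set B) x y : Asubmod A S -> S x -> S y -> S (x + y).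
Proof. by case=> _ [h _]; apply: h. Qed.
Lemma smM (B : comPzRingType) (A S : set B) a x : Asubmod A S -> A a -> S x -> S (a * x).
Proof. by case=> _ [] _; apply. Qed.
Lemma smMr (B : comPzRingType) (A S : set B) a x : Asubmod A S -> A a -> S x -> S (x * a).
Proof. by move=> h ha hx; rewrite mulrC; apply: smM h ha hx. Qed.
Lemma sm_sum (B : comPzRingType) (A S : set B) n (F : 'I_n -> B) :
  Asubmod A S -> (forall i, S (F i)) -> S (\sum_(i < n) F i).
Proof. by move=> h hF; elim/big_ind: _ => //; [apply: sm0 h|move=> x y; apply: smD h]. Qed.
Lemma idsm (B : comPzRingType) (A S : set B) : ideal A S -> Asubmod A S. Proof. by case. Qed.
Lemma idA (B : comPzRingType) (A S : set B) x : ideal A S -> S x -> A x. Proof. by case=> _; apply. Qed.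

Fixpoint span (B : comPzRingType) (A : set B) (s : seq B) : set B :=
  match s with
  | [::] => [set x | x = 0]
  | g :: s' => [set x | exists c y, A c /\ span A s' y /\ x = c * g + y]
  end.

Fixpoint prodseq (B : comPzRingType) (s t : seq B) : seq B :=
  if s is a :: s' then map (fun b => a * b) t ++ prodseq s' t else [::].

Definition gensin (B : comPzRingType) (S : set B) (s : seq B) := forall g, g \in s -> S g.

Lemma span_sm (B : comPzRingType) (A : set B) (hA : is_subring A) s : Asubmod A (span A s).
Proof.
elim: s => [|g s [h0 [hD hM]]] /=.
  split => //; split => [x y -> ->|a x _ ->]; by rewrite ?addr0 ?mulr0.
split; first by exists 0, 0; rewrite mul0r addr0; split => //; apply: A0.
split.
  move=> x y [c [y1 [hc [hy1 ->]]]] [c' [y2 [hc' [hy2 ->]]]].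
  exists (c + c'), (y1 + y2); split; first exact: AD.
  by split; [apply: hD|rewrite mulrDl; rewrite addrACA].
move=> a x ha [c [y1 [hc [hy1 ->]]]]; exists (a * c), (a * y1).
by split; [apply: AM|split; [apply: hM|rewrite mulrDr mulrA]].
Qed.

Lemma span_gen (B : comPzRingType) (A : set B) (hA : is_subring A) s g : g \in s -> span A s g.
Proof.
elim: s => [//|h s IH] /=; rewrite in_cons => /orP [/eqP ->|/IH hg].
  exists 1, 0; rewrite mul1r addr0; split; first exact: A1.
  by split => //; apply: sm0 (span_sm hA s).
by exists 0, g; rewrite mul0r add0r; split => //; apply: A0.
Qed.

Lemma span_sub (B : comPzRingType) (A S : set B) s :
  Asubmod A S -> gensin S s -> span A s `<=` S.
Proof.
move=> hS; elim: s => [|g s IH] /=.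
  by move=> _ x /= ->; apply: sm0 hS.
move=> hg x [c [y [hc [hy ->]]]].
apply: (smD hS); first by apply: (smM hS hc); apply: hg; rewrite in_cons eqxx.
by apply: IH hy => h hh; apply: hg; rewrite in_cons hh orbT.
Qed.

Lemma Asm (B : comPzRingType) (A : set B) (hA : is_subring A) : Asubmod A A.
Proof. by split; [apply: A0|split; [apply: AD|apply: AM]]. Qed.

Lemma span_ideal (B : comPzRingType) (A : set B) (hA : is_subring A) s :
  gensin A s -> ideal A (span A s).
Proof. by move=> h; split; [apply: span_sm|apply: span_sub => //; apply: Asm]. Qed.

Lemma span_cat (B : comPzRingType) (A : set B) (hA : is_subring A) u v a b :
  span A u a -> span A v b -> span A (u ++ v) (a + b).
Proof.
elim: u a => [a /= -> hb|g u IH a [c [y [hc [hy ->]]]] hb] /=; first by rewrite add0r.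
by exists c, (y + b); split => //; split; [apply: IH|rewrite addrA].
Qed.

Lemma span_catP (B : comPzRingType) (A : set B) (hA : is_subring A) u v z :
  span A (u ++ v) z -> exists a b, span A u a /\ span A v b /\ z = a + b.
Proof.
elim: u z => [z hz|g u IH z [c [y [hc [hy ->]]]]] /=; first by exists 0, z; rewrite add0r.
have [a [b [ha [hb ->]]]] := IH _ hy.
by exists (c * g + a), b; split; [exists c, a|split => //; rewrite addrA].
Qed.

Lemma span_catl (B : comPzRingType) (A : set B) (hA : is_subring A) u v :
  span A u `<=` span A (u ++ v).
Proof. by move=> a ha; rewrite -(addr0 a); apply: span_cat => //; apply: sm0 (span_sm hA v). Qed.

Lemma span_catr (B : comPzRingType) (A : set B) (hA : is_subring A) u v :
  span A v `<=` span A (u ++ v).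
Proof. by move=> b hb; rewrite -(add0r b); apply: span_cat => //; apply: sm0 (span_sm hA u). Qed.

Lemma span_map (B : comPzRingType) (A : set B) (hA : is_subring A) a t y :
  span A t y -> span A (map (fun b => a * b) t) (a * y).
Proof.
elim: t y => [y /= ->|h t IH y [d [y' [hd [hy ->]]]]] /=; first by rewrite mulr0.
exists d, (a * y'); split => //; split; first exact: IH.
by rewrite mulrDr mulrCA.
Qed.

Lemma span_mul (B : comPzRingType) (A : set B) (hA : is_subring A) s t x y :
  span A s x -> span A t y -> span A (prodseq s t) (x * y).
Proof.
move=> + hy; elim: s x => [x /= ->|g s IH x [c [x' [hc [hx ->]]]]] /=; first by rewrite mul0r.
rewrite mulrDl -mulrA; apply: span_cat => //.
  by apply: smM (span_sm hA _) hc _; apply: span_map.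
exact: IH.
Qed.

Lemma prodseq_mem (B : comPzRingType) (s t : seq B) g :
  g \in prodseq s t -> exists a b, [/\ a \in s, b \in t & g = a * b].
Proof.
elim: s => [//|a s IH] /=; rewrite mem_cat => /orP [/mapP [b hb ->]|/IH [a' [b [h1 h2 ->]]]].
  by exists a, b; rewrite in_cons eqxx.
by exists a', b; rewrite in_cons h1 orbT.
Qed.

Lemma prodseq_sub (B : comPzRingType) (A S : set B) s t :
  Asubmod A S -> (forall a b, a \in s -> b \in t -> S (a * b)) -> span A (prodseq s t) `<=` S.
Proof.
move=> hS h; apply: span_sub => // g /prodseq_mem [a [b [ha hb ->]]]; exact: h.
Qed.

Lemma gensin_prod (B : comPzRingType) (A : set B) (hA : is_subring A) s t :
  gensin A s -> gensin A t -> gensin A (prodseq s t).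
Proof. by move=> hs ht g /prodseq_mem [a [b [ha hb ->]]]; apply: (AM hA); [apply: hs|apply: ht]. Qed.

Lemma spanE (B : comPzRingType) (A : set B) (hA : is_subring A) s z :
  span A s z <-> exists c : 'I_(size s) -> B, (forall i, A (c i)) /\ z = \sum_(i < size s) c i * s`_i.
Proof.
elim: s z => [|g s IH] z /=.
  split; first by move=> ->; exists (fun _ => 0); rewrite big_ord0; split => // -[].
  by case=> c [_ ->]; rewrite big_ord0.
split.
  move=> [c0 [y [hc0 [/IH [c' [hc' ->]] ->]]]].
  exists (fun i : 'I_(size s).+1 => if unlift ord0 i is Some j then c' j else c0).
  split; first by move=> i; case: (unlift ord0 i).
  rewrite big_ord_recl /= unlift_none; congr (_ + _).
  by apply: eq_bigr => i _; rewrite liftK.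
move=> [c [hc ->]]; rewrite big_ord_recl; exists (c ord0), (\sum_(i < size s) c (lift ord0 i) * s`_i).
split => //; split => //; apply/IH; by exists (fun i => c (lift ord0 i)).
Qed.

Lemma span_fg (B : comPzRingType) (A : set B) (hA : is_subring A) s :
  gensin A s -> fin_gen A (span A s).
Proof.
move=> hs; exists (size s), (fun i => s`_i); split.
  by move=> i; apply: hs; apply: mem_nth.
by apply/seteqP; split => z /(spanE hA).
Qed.

Lemma BregP (B : comPzRingType) (S : set B) :
  Bregular S <-> exists n (x b : 'I_n -> B), (forall i, S (x i)) /\ 1 = \sum_(i < n) x i * b i.
Proof.
split.
  move=> h; have : prodmod S [set: B] 1 by rewrite h.
  by case=> n [x [b [hx ->]]]; exists n, x, b; split => // i; case: (hx i).
move=> [n [x [b [hx h1]]]]; apply/seteqP; split => // z _.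
exists n, x, (fun i => b i * z); split; first by move=> i; split => //; apply: hx.
rewrite -{1}[z]mul1r {1}h1 mulr_suml; apply: eq_bigr => i _; by rewrite mulrA.
Qed.

Lemma Breg_sub (B : comPzRingType) (S T : set B) : S `<=` T -> Bregular S -> Bregular T.
Proof.
move=> hST /BregP [n [x [b [hx h1]]]]; apply/BregP; exists n, x, b; split => // i.
exact: hST.
Qed.

Definition invw (B : comPzRingType) (A : set B) (I : set B) :=
  exists n (s u : 'I_n -> B), (forall i, I (s i) /\ forall x, I x -> A (u i * x)) /\
    1 = \sum_(i < n) s i * u i.

Lemma BinvP (B : comPzRingType) (A : set B) (hA : is_subring A) I :
  ideal A I -> (Binvertible A I <-> invw A I).
Proof.
move=> hI; split.
  move=> [U [hU hIU]]; have : prodmod I U 1 by rewrite hIU; exact: A1.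
  move=> [n [s [u [hsu h1]]]]; exists n, s, u; split => // i.
  split; first by case: (hsu i).
  move=> x hx; rewrite -hIU; exists 1%N, (fun _ => x), (fun _ => u i).
  split; first by move=> _; split => //; case: (hsu i).
  by rewrite big_ord1 mulrC.
move=> [n [s [u [hsu h1]]]].
exists [set b | forall x, I x -> A (b * x)]; split.
  split; first by move=> x _; rewrite mul0r; apply: A0.
  split; first by move=> x y hx hy z hz; rewrite mulrDl; apply: AD => //; [apply: hx|apply: hy].
  by move=> a x ha hx z hz; rewrite -mulrA; apply: AM => //; apply: hx.
apply/seteqP; split.
  move=> z [m [s' [u' [hsu' ->]]]]; apply: A_sum => // i.
  by case: (hsu' i) => hs hu; rewrite mulrC; apply: hu.
move=> a ha; exists n, s, (fun i => a * u i); split.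
  move=> i; split; first by case: (hsu i).
  by move=> x hx /=; rewrite -mulrA; apply: AM => //; case: (hsu i) => _; apply.
rewrite -{1}[a]mulr1 {1}h1 mulr_sumr; apply: eq_bigr => i _; by rewrite mulrCA.
Qed.

Lemma max_comax (B : comPzRingType) (A : set B) (hA : is_subring A) m x :
  maximal_ideal A m -> A x -> ~ m x -> exists r y, [/\ A r, m y & 1 = y + r * x].
Proof.
move=> [hm [m1 hmax]] hx hmx.
pose J := [set z | exists r y, [/\ A r, m y & z = y + r * x]].
have hJ : ideal A J.
  split; last by move=> z [r [y [hr hy ->]]]; apply: AD => //; [apply: (idA hm)|apply: AM].
  split; first by exists 0, 0; rewrite mul0r addr0; split => //; [apply: A0|apply: sm0 (idsm hm)].
  split.
    move=> z1 z2 [r [y [hr hy ->]]] [r' [y' [hr' hy' ->]]]; exists (r + r'), (y + y').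
    by split; [apply: AD|apply: (smD (idsm hm))|rewrite mulrDl addrACA].
  move=> a z ha [r [y [hr hy ->]]]; exists (a * r), (a * y).
  by split; [apply: AM|apply: (smM (idsm hm))|rewrite mulrDr mulrA].
have hmJ : m `<=` J by move=> y hy; exists 0, y; rewrite mul0r addr0; split => //; apply: A0.
apply: contrapT => hn.
have hJ1 : ~ J 1 by move=> [r [y [hr hy h1]]]; apply: hn; exists r, y.
have := hmax J hJ hmJ hJ1 => hJm; apply: hmx; rewrite -hJm.
by exists 1, 0; rewrite mul1r add0r; split => //; [apply: A1|apply: sm0 (idsm hm)].
Qed.

Lemma max_prime (B : comPzRingType) (A : set B) (hA : is_subring A) m x y :
  maximal_ideal A m -> A x -> A y -> m (x * y) -> ~ m x -> m y.
Proof.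
move=> hm hx hy hxy hmx; have [r [t [hr ht h1]]] := max_comax hA hm hx hmx.
have hmi := idsm hm.1.
rewrite -[y]mul1r h1 mulrDl; apply: (smD hmi); first exact: (smMr hmi hy).
by rewrite -mulrA; apply: (smM hmi hr).
Qed.

Lemma max_prime_n (B : comPzRingType) (A : set B) (hA : is_subring A) m x y :
  maximal_ideal A m -> A x -> A y -> ~ m x -> ~ m y -> ~ m (x * y).
Proof. by move=> hm hx hy hmx hmy hxy; apply: hmy; apply: (max_prime hA hm hx hy hxy). Qed.

Lemma sum_notin (B : comPzRingType) (A S : set B) n (F : 'I_n -> B) :
  Asubmod A S -> ~ S (\sum_(i < n) F i) -> exists i, ~ S (F i).
Proof.
move=> hS hn; apply: contrapT => h; apply: hn; apply: (sm_sum hS) => i.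
by apply: contrapT => hi; apply: h; exists i.
Qed.

Lemma max_distinct (B : comPzRingType) (A : set B) (hA : is_subring A) m1 m2 :
  maximal_ideal A m1 -> maximal_ideal A m2 -> m1 <> m2 ->
  exists u v, [/\ m1 u, m2 v & u + v = 1].
Proof.
move=> h1 h2 hne.
have : ~ (m2 `<=` m1).
  move=> hs; apply: hne; case: h2 => _ [_ hmax].
  by apply: hmax => //; [exact: h1.1|exact: h1.2.1].
move=> /not_sub [v [hv hv1]].
have [r [y [hr hy e]]] := max_comax hA h1 (idA h2.1 hv) hv1.
exists y, (r * v); split => //; first exact: (smM (idsm h2.1) hr hv).
Qed.

Lemma exists_max (B : comPzRingType) (A : set B) (hA : is_subring A) C :
  ideal A C -> ~ C 1 -> exists m, maximal_ideal A m /\ C `<=` m.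
Proof.
move=> hC hC1.
pose P := [set J : set B | J = set0 \/ [/\ ideal A J, C `<=` J & ~ J 1]].
have hch : forall F : set (set B), F `<=` P -> total_on F subset -> P (\bigcup_(X in F) X).
  move=> F hFP htot.
  have [[J0 [hFJ0 hJ0]]|hno] := pselect (exists J0, F J0 /\ J0 <> set0).
    right; have [hJ0i hCJ0 hJ01] : [/\ ideal A J0, C `<=` J0 & ~ J0 1] by case: (hFP J0 hFJ0).
    have hmem : forall x, (\bigcup_(X in F) X) x -> exists J, [/\ F J, J x & [/\ ideal A J, C `<=` J & ~ J 1]].
      move=> x [J hFJ hJx]; exists J; split => //.
      case: (hFP J hFJ) => // hJ; by rewrite hJ in hJx.
    split.
    - split; last by move=> x /hmem [J [_ hJx [hJ _ _]]]; apply: (idA hJ).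
      split; first by exists J0 => //; apply: (sm0 (idsm hJ0i)).
      split.
        move=> x y /hmem [J1 [hF1 hx [hJ1 _ _]]] /hmem [J2 [hF2 hy [hJ2 _ _]]].
        case: (htot _ _ hF1 hF2) => hs.
          by exists J2 => //; apply: (smD (idsm hJ2)) => //; apply: hs.
        by exists J1 => //; apply: (smD (idsm hJ1)) => //; apply: hs.
      move=> a x ha /hmem [J [hF hx [hJ _ _]]]; exists J => //; exact: (smM (idsm hJ)).
    - by move=> x hx; exists J0 => //; apply: hCJ0.
    - by move=> /hmem [J [_ hJ1 [_ _ hn1]]].
  left; apply/seteqP; split => // x [J hFJ hJx].
  have hJ : J = set0 by apply: contrapT => hJ; apply: hno; exists J.
  by rewrite hJ in hJx.
have [M [hPM hMmax]] := Zorn_bigcup hch.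
have hPC : P C by right; split => //; exact: subset_refl.
case: hPM => [hM0|[hM hCM hM1]].
  exfalso; apply: (hMmax C) => //; rewrite hM0; split => //.
  move=> hC0; have := hC0 0 (sm0 (idsm hC)); by [].
exists M; split => //; split => //; split => // J hJ hMJ hJ1.
apply: contrapT => hne; apply: (hMmax J); last by right; split => //; apply: subset_trans hMJ.
split => // hJM; apply: hne; apply/seteqP; split => //.
Qed.

Lemma pick_gens (B : comPzRingType) (A : set B) (I : set B) :
  locally_principal A I -> forall s : seq {classic (set B)},
  exists ga : seq B, gensin I ga /\ forall m : set B, (m : {classic (set B)}) \in s ->
    maximal_ideal A m -> exists a, a \in ga /\
      forall x, I x -> exists s0 r, [/\ A s0, ~ m s0, A r & s0 * x = r * a].
Proof.
move=> hlp; elim => [|m0 s [ga [hga hm]]]; first by exists [::].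
have [hmax0|hn] := pselect (maximal_ideal A m0).
  have [a [ha hpa]] := hlp m0 hmax0.
  exists (a :: ga); split.
    by move=> g; rewrite in_cons => /orP [/eqP ->|/hga].
  move=> m; rewrite in_cons => /orP [/eqP -> _|hms hmm].
    by exists a; rewrite in_cons eqxx.
  have [a' [ha' h']] := hm m hms hmm; exists a'; by rewrite in_cons ha' orbT.
exists ga; split => // m; rewrite in_cons => /orP [/eqP -> //|]; exact: hm.
Qed.

Lemma dir_fc (B : comPzRingType) (A : set B) (hA : is_subring A) :
  almost_Prufer A -> finite_character A ->
  forall I, ideal A I -> Bregular I -> locally_principal A I -> Binvertible A I.
Proof.
move=> hAP hFC I hI hreg hlp.
have [n [x [b [hx h1]]]] := (BregP I).1 hreg.
pose gJ := map x (enum 'I_n).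
have hgJ : gensin I gJ by move=> g /mapP [i _ ->].
pose J := span A gJ.
have hJ : ideal A J by apply: span_ideal => // g /hgJ; apply: idA.
have hJI : J `<=` I by apply: span_sub => //; apply: idsm.
have hJreg : Bregular J.
  apply/BregP; exists n, x, b; split => // i; apply: span_gen => //.
  by apply: map_f; rewrite mem_enum.
have hfin := hFC J hJ hJreg.
have [sm hsm] := (@finite_seqP {classic (set B)} _).1 hfin.
have [ga [hga hgaP]] := pick_gens hlp sm.
pose I' := span A (gJ ++ ga).
have hgI' : gensin I (gJ ++ ga) by move=> g; rewrite mem_cat => /orP [/hgJ|/hga].
have hI' : ideal A I' by apply: span_ideal => // g /hgI'; apply: idA.
have hI'I : I' `<=` I by apply: span_sub => //; apply: idsm.
have hJI' : J `<=` I' by apply: span_catl.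
have hI'reg : Bregular I' by apply: Breg_sub hJI' hJreg.
have hI'fg : fin_gen A I' by apply: span_fg => // g /hgI'; apply: idA.
have [k [s [u [hsu e1]]]] := (BinvP hA hI').1 (hAP I' hI' hI'fg hI'reg).
have hII' : I `<=` I'.
  move=> z hz; have hzA : A z by apply: (idA hI).
  pose C := [set c | A c /\ I' (c * z)].
  have hC : ideal A C.
    split; last by move=> c [].
    split; first by split; [apply: A0|rewrite mul0r; apply: (sm0 (idsm hI'))].
    split.
      move=> c c' [hc hcz] [hc' hcz']; split; first exact: AD.
      by rewrite mulrDl; apply: (smD (idsm hI')).
    move=> a c ha [hc hcz]; split; first exact: AM.
    by rewrite -mulrA; apply: (smM (idsm hI')).
  have [hC1|hC1] := pselect (C 1); first by case: hC1 => _; rewrite mul1r.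
  have [m [hm hCm]] := exists_max hA hC hC1.
  exfalso.
  have [hJm|hJm] := pselect (J `<=` m).
    have hmsm : (m : {classic (set B)}) \in sm.
      have : [set m | maximal_ideal A m /\ J `<=` m] m by split.
      by rewrite hsm.
    have [a [hag hpa]] := hgaP m hmsm hm.
    have [s0 [r [hs0 hms0 hr e]]] := hpa z hz.
    apply: hms0; apply: hCm; split => //; rewrite e.
    apply: (smM (idsm hI') hr); apply: span_gen => //; by rewrite mem_cat hag orbT.
  have [j [hj hmj]] := not_sub hJm.
  apply: hmj; apply: hCm; split; first exact: (idA hJ).
  by rewrite mulrC; apply: hJI'; apply: (smM (idsm hJ) hzA).
apply/(BinvP hA hI); exists k, s, u; split => // i.
case: (hsu i) => hs hu; split; first exact: hI'I.
by move=> z /hII'; apply: hu.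
Qed.

Definition XP (B : comPzRingType) (A : set B) (gJ P : seq B) : set (set B) :=
  [set m | [/\ maximal_ideal A m, span A gJ `<=` m & ~ (span A P `<=` m)]].

Definition stepP (B : comPzRingType) (A : set B) (gJ P : seq B) (Jq : seq B * set B) :=
  [/\ gensin A Jq.1, span A gJ `<=` span A Jq.1, span A Jq.1 `<=` Jq.2, maximal_ideal A Jq.2 &
   [/\ ~ (span A P `<=` Jq.2),
   (exists y p, [/\ span A Jq.1 y, span A P p & y + p = 1]) &
   infinite_set (XP A gJ (prodseq P Jq.1))]].

Lemma XP_prod (B : comPzRingType) (A : set B) (hA : is_subring A) gJ P Q m :
  gensin A P -> gensin A Q -> XP A gJ P m -> ~ (span A Q `<=` m) -> XP A gJ (prodseq P Q) m.
Proof.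
move=> hP hQ [hm hJm hPm] hQm; split => // hPQ.
have [p [hp hmp]] := not_sub hPm; have [q [hq hmq]] := not_sub hQm.
apply: (max_prime_n hA hm _ _ hmp hmq); first exact: (idA (span_ideal hA hP)).
  exact: (idA (span_ideal hA hQ)).
by apply: hPQ; apply: span_mul.
Qed.

Lemma step (B : comPzRingType) (A : set B) (hA : is_subring A) gJ P :
  gensin A gJ -> gensin A P -> infinite_set (XP A gJ P) -> exists Jq, stepP A gJ P Jq.
Proof.
move=> hgJ hP hinf.
have [m1 hm1] := infinite_setN0 hinf.
have [m2 [hm2 hm21]] := infinite_setN0 (infinite_setD hinf (finite_set1 m1)).
have hne : m1 <> m2 by move=> e; apply: hm21; rewrite e.
have hPid := span_ideal hA hP.
case: (hm1) => hmax1 hJ1 hP1; case: (hm2) => hmax2 hJ2 hP2.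
have [u [v [hu hv e]]] := max_distinct hA hmax1 hmax2 hne.
have cand : forall m' w, XP A gJ P m' -> m' w -> exists y r p,
    let J' := gJ ++ [:: y; w] in
    [/\ gensin A J', span A gJ `<=` span A J', span A J' `<=` m', span A J' w &
     [/\ span A J' y, span A P (r * p) & y + r * p = 1]].
  move=> m' w [hm' hJm' hPm'] hw.
  have [p [hp hmp]] := not_sub hPm'.
  have hpA : A p by apply: (idA hPid).
  have [r [y [hr hy e1]]] := max_comax hA hm' hpA hmp.
  exists y, r, p => J'; split.
  - move=> g; rewrite mem_cat => /orP [/hgJ //|]; rewrite !in_cons orbF => /orP [] /eqP ->.
      exact: (idA hm'.1).
    exact: (idA hm'.1).
  - exact: span_catl.
  - apply: span_sub; first exact: idsm hm'.1.
    move=> g; rewrite mem_cat => /orP [hg|]; first by apply: hJm'; apply: span_gen.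
    by rewrite !in_cons orbF => /orP [] /eqP ->.
  - by apply: span_gen => //; rewrite mem_cat !in_cons eqxx !orbT.
  - split; [by apply: span_gen => //; rewrite mem_cat !in_cons eqxx !orbT| |by rewrite -e1].
    exact: (smM (idsm hPid) hr hp).
have [y1 [r1 [p1 [hA1 hJ'1 hm'1 hw1 [hy1 hp1 e1]]]]] := cand m1 u hm1 hu.
have [y2 [r2 [p2 [hA2 hJ'2 hm'2 hw2 [hy2 hp2 e2]]]]] := cand m2 v hm2 hv.
set J1 := gJ ++ [:: y1; u] in hA1 hJ'1 hm'1 hw1 hy1.
set J2 := gJ ++ [:: y2; v] in hA2 hJ'2 hm'2 hw2 hy2.
have hcov : XP A gJ P `<=` XP A gJ (prodseq P J1) `|` XP A gJ (prodseq P J2).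
  move=> m hm; case: (hm) => hmm _ _.
  have [h1|h1] := pselect (span A J1 `<=` m); last by left; apply: XP_prod.
  have [h2|h2] := pselect (span A J2 `<=` m); last by right; apply: XP_prod.
  exfalso; apply: hmm.2.1; rewrite -e; apply: (smD (idsm hmm.1)).
    exact: h1.
  exact: h2.
have [hi1|hf1] := pselect (infinite_set (XP A gJ (prodseq P J1))).
  exists (J1, m1); split => //=; split => //.
  by exists y1, (r1 * p1).
have [hi2|hf2] := pselect (infinite_set (XP A gJ (prodseq P J2))).
  exists (J2, m2); split => //=; split => //.
  by exists y2, (r2 * p2).
exfalso; apply: hinf; apply: sub_finite_set hcov _.
by rewrite finite_setU; split; apply: contrapT.
Qed.

Definition Ln (B : comPzRingType) (A : set B) (gJ P : seq B) : set B :=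
  [set x | A x /\ forall k, span A (gJ ++ P) k -> span A gJ (x * k)].

Lemma Ln_ideal (B : comPzRingType) (A : set B) (hA : is_subring A) gJ P :
  ideal A (Ln A gJ P).
Proof.
have hJ := span_sm hA gJ.
split; last by move=> x [].
split; first by split; [apply: A0|move=> k _; rewrite mul0r; apply: (sm0 hJ)].
split.
  move=> x y [hx hxk] [hy hyk]; split; first exact: AD.
  by move=> k hk; rewrite mulrDl; apply: (smD hJ); [apply: hxk|apply: hyk].
move=> a x ha [hx hxk]; split; first exact: AM.
by move=> k hk; rewrite -mulrA; apply: (smM hJ ha); apply: hxk.
Qed.

Lemma J_Ln (B : comPzRingType) (A : set B) (hA : is_subring A) gJ P :
  gensin A gJ -> gensin A P -> span A gJ `<=` Ln A gJ P.
Proof.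
move=> hgJ hP j hj; split; first exact: (idA (span_ideal hA hgJ)).
move=> k hk; rewrite mulrC; apply: (smM (span_sm hA gJ)) => //.
apply: (idA (span_ideal hA _)) hk => g; rewrite mem_cat => /orP [/hgJ|/hP] //.
Qed.

Lemma Ln_anti (B : comPzRingType) (A : set B) gJ P Q :
  span A (gJ ++ Q) `<=` span A (gJ ++ P) -> Ln A gJ P `<=` Ln A gJ Q.
Proof. by move=> hs x [hx hxk]; split => // k hk; apply: hxk; apply: hs. Qed.

Lemma P_prod_sub (B : comPzRingType) (A : set B) (hA : is_subring A) P Q :
  gensin A Q -> span A (prodseq P Q) `<=` span A P.
Proof.
move=> hQ; apply: prodseq_sub; first exact: span_sm.
move=> a b ha hb; rewrite mulrC; apply: (smM (span_sm hA P)); first exact: hQ.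
exact: span_gen.
Qed.

Lemma K_prod_sub (B : comPzRingType) (A : set B) (hA : is_subring A) gJ P Q :
  gensin A Q -> span A (gJ ++ prodseq P Q) `<=` span A (gJ ++ P).
Proof.
move=> hQ z /(span_catP hA) [a [b [ha [hb ->]]]]; apply: span_cat => //.
exact: (P_prod_sub hA hQ).
Qed.

Lemma K_step (B : comPzRingType) (A : set B) (hA : is_subring A) gJ P Q q z :
  A q -> span A Q q -> span A (gJ ++ P) z -> span A (gJ ++ prodseq P Q) (q * z).
Proof.
move=> hq hQq /(span_catP hA) [a [b [ha [hb ->]]]]; rewrite mulrDr; apply: span_cat => //.
  exact: (smM (span_sm hA gJ) hq).
by rewrite mulrC; apply: span_mul.
Qed.

Fixpoint iterP (B : comPzRingType) (f : seq B -> seq B) (n : nat) : seq B :=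
  if n is n'.+1 then prodseq (iterP f n') (f (iterP f n')) else [:: 1].

Lemma main_inf (B : comPzRingType) (A : set B) (hA : is_subring A) (gJ : seq B) :
  almost_Prufer A ->
  (forall I, ideal A I -> Bregular I -> locally_principal A I -> Binvertible A I) ->
  gensin A gJ -> Bregular (span A gJ) -> invw A (span A gJ) ->
  infinite_set [set m | maximal_ideal A m /\ span A gJ `<=` m] -> False.
Proof.
move=> hAP hyp hgJ hJreg [nJ [sJ [uJ [hsuJ e1J]]]] hinf.
have hJ := span_ideal hA hgJ.
have hJsm := span_sm hA gJ.
have hex : forall P, exists Jq, gensin A P ->
    infinite_set (XP A gJ P) -> stepP A gJ P Jq.
  move=> P; have [hP|hP] := pselect (gensin A P); last by exists ([::], set0).
  have [hi|hi] := pselect (infinite_set (XP A gJ P)); last by exists ([::], set0).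
  by have [Jq hJq] := step hA hgJ hP hi; exists Jq.
have [f hf] := choice hex.
pose fJ := fun P => (f P).1.
pose Pn := iterP fJ.
have hinv : forall n, gensin A (Pn n) /\ infinite_set (XP A gJ (Pn n)).
  elim => [|n [hPn hin]] /=.
    split; first by move=> g; rewrite in_cons orbF => /eqP ->; apply: A1.
    move=> hfin; apply: hinf; apply: sub_finite_set hfin => m [hm hJm]; split => // h.
    by apply: hm.2.1; apply: h; apply: span_gen => //; rewrite in_cons eqxx.
  have [hA1 _ _ _ [_ _ hi1]] := hf _ hPn hin.
  by split => //; apply: gensin_prod.
have st : forall n, stepP A gJ (Pn n) (f (Pn n)).
  by move=> n; case: (hinv n) => h1 h2; apply: hf.
have hfJA : forall n, gensin A (fJ (Pn n)) by move=> n; case: (st n).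
have hPA : forall n, gensin A (Pn n) by move=> n; case: (hinv n).
have hKA : forall n, gensin A (gJ ++ Pn n).
  by move=> n g; rewrite mem_cat => /orP [/hgJ|/hPA].
pose K := fun n => span A (gJ ++ Pn n).
pose L := fun n => Ln A gJ (Pn n).
have Kdec : forall n, K n.+1 `<=` K n by move=> n; apply: K_prod_sub.
have Kmono : forall n d, K (n + d)%N `<=` K n.
  move=> n; elim => [|d IH]; first by rewrite addn0.
  by rewrite addnS; apply: subset_trans (Kdec _) IH.
have Pdec : forall n d, span A (Pn (n + d)%N) `<=` span A (Pn n).
  move=> n; elim => [|d IH]; first by rewrite addn0.
  by rewrite addnS; apply: subset_trans IH; apply: P_prod_sub.
have Lmono : forall n n', (n <= n')%N -> L n `<=` L n'.
  by move=> n n' /subnKC <-; apply: Ln_anti; apply: Kmono.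
have JL : forall n, span A gJ `<=` L n by move=> n; apply: J_Ln.
pose I := [set x | exists n, L n x].
have hI : ideal A I.
  split; last by move=> x [n [hx _]].
  split; first by exists 0%N; apply: (sm0 (idsm (Ln_ideal hA _ _))).
  split.
    move=> x y [n hx] [n' hy]; exists (maxn n n').
    apply: (smD (idsm (Ln_ideal hA _ _))).
      by apply: (Lmono n) hx; apply: leq_maxl.
    by apply: (Lmono n') hy; apply: leq_maxr.
  by move=> a x ha [n hx]; exists n; apply: (smM (idsm (Ln_ideal hA _ _))).
have hIreg : Bregular I.
  by apply: Breg_sub hJreg => j hj; exists 0%N; apply: JL.
have hKid : forall n, ideal A (K n) by move=> n; apply: span_ideal.
have hKinv : forall n, invw A (K n).
  move=> n; apply/(BinvP hA (hKid n)); apply: hAP; first exact: hKid.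
    exact: span_fg.
  by apply: Breg_sub hJreg; apply: span_catl.
have hsuJA : forall a, A (sJ a * uJ a).
  by move=> a; case: (hsuJ a) => hs hu; rewrite mulrC; apply: hu.
have hlp : locally_principal A I.
  move=> m hm.
  have hmsm := idsm hm.1.
  have [hJm|hJm] := pselect (span A gJ `<=` m); last first.
    have [j [hj hmj]] := not_sub hJm.
    exists j; split; first by exists 0%N; apply: JL.
    move=> x hx; exists j, x; split => //; first exact: (idA hJ).
      exact: (idA hI).
    by rewrite mulrC.
  have [i hi] : exists i, forall n, (i <= n)%N -> ~ (span A (fJ (Pn n)) `<=` m).
    have [[i hPi]|hno] := pselect (exists i, span A (Pn i) `<=` m).
      exists i => n hin hfm.
      have [_ _ _ _ [_ [y [p [hy hp e]]] _]] := st n.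
      apply: hm.2.1; rewrite -e; apply: (smD hmsm); first exact: hfm.
      by apply: hPi; move: hp; rewrite -(subnKC hin); apply: Pdec.
    exists 0%N => n _ hfm; apply: hno; exists n.+1.
    apply: prodseq_sub => // a b ha hb; apply: (smM hmsm); first exact: (hPA n a ha).
    by apply: hfm; apply: span_gen.
  have hloc : forall d, exists t, [/\ A t, ~ m t & forall k, K i k -> K (i + d)%N (t * k)].
    elim => [|d [t [ht hmt htk]]].
      by exists 1; split; [apply: A1|exact: hm.2.1|move=> k; rewrite mul1r addn0].
    have [q [hq hmq]] := not_sub (hi (i + d)%N (leq_addr _ _)).
    have hqA : A q by exact: (idA (span_ideal hA (hfJA (i + d)%N)) hq).
    exists (q * t); split; first exact: AM.
      exact: (max_prime_n hA hm hqA ht hmq hmt).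
    move=> k hk; rewrite addnS -mulrA; apply: K_step => //; exact: htk.
  have [nl [sg [tau [hst e1K]]]] := hKinv i.
  have [a0 ha0] : exists a0, ~ m (sJ a0 * uJ a0).
    by apply: (sum_notin hmsm); rewrite -e1J; exact: hm.2.1.
  have [l0 hl0] : exists l0, ~ m (sg l0 * tau l0).
    by apply: (sum_notin hmsm); rewrite -e1K; exact: hm.2.1.
  have hsgA : A (sg l0 * tau l0).
    by case: (hst l0) => hs hu; rewrite mulrC; apply: hu.
  have hsJK : K i (sJ a0) by apply: span_catl; case: (hsuJ a0).
  exists (sJ a0 * tau l0); split.
    exists i; split.
      by rewrite mulrC; case: (hst l0) => _ hu; apply: hu.
    move=> k hk; rewrite -mulrA; apply: (smMr hJsm); last by case: (hsuJ a0).
    by case: (hst l0) => _ hu; apply: hu.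
  move=> x [n hxn].
  have [t [htA hmt htx]] : exists t, [/\ A t, ~ m t & L i (t * x)].
    have [hni|hin] := leqP n i.
      exists 1; split; [exact: A1|exact: hm.2.1|rewrite mul1r; exact: (Lmono n)].
    have [t [ht hmt htk]] := hloc (n - i)%N.
    exists t; split => //; split; first by apply: AM => //; case: hxn.
    move=> k hk; rewrite -mulrA mulrCA; case: hxn => _ hxk; apply: hxk.
    by move: (htk k hk); rewrite subnKC // ltnW.
  have hxA : A x by apply: (idA hI); exists n.
  exists (sJ a0 * uJ a0 * (sg l0 * tau l0) * t), (uJ a0 * (sg l0 * (t * x))).
  split.
  - by apply: AM => //; apply: AM.
  - apply: (max_prime_n hA hm) => //; first by apply: AM.
    exact: (max_prime_n hA hm).
  - case: (hsuJ a0) => _ hu; apply: hu; rewrite mulrC.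
    by case: htx => _ h; apply: h; case: (hst l0).
  - ring.
have [k [s [u [hsu e1]]]] := (BinvP hA hI).1 (hyp I hI hIreg hlp).
have [nf hnf] := choice (fun (i : 'I_k) => (hsu i).1).
pose N := (\max_(i < k) nf i)%N.
have hIL : I `<=` L N.
  move=> x hx; rewrite -[x]mul1r e1 mulr_suml.
  apply: (sm_sum (idsm (Ln_ideal hA _ _))) => i; rewrite -mulrA.
  apply: (smMr (idsm (Ln_ideal hA _ _))); first by case: (hsu i) => _ hu; apply: hu.
  by apply: (Lmono (nf i)); [apply: leq_bigmax|apply: hnf].
have [_ hJJ' hJ'm hmax [hPm _ _]] := st N.
have [t [ht hmt]] := not_sub hPm.
have htA : A t by exact: (idA (span_ideal hA (hPA N)) ht).
have [nl [sg [tau [hst e1K]]]] := hKinv N.+1.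
apply: hmt.
have hKm : K N.+1 `<=` (f (Pn N)).2.
  apply: span_sub; first exact: (idsm hmax.1).
  move=> g; rewrite mem_cat => /orP [hg|/prodseq_mem [a [b [ha hb ->]]]].
    by apply: hJ'm; apply: hJJ'; apply: span_gen.
  apply: (smM (idsm hmax.1)); first exact: (hPA N a ha).
  by apply: hJ'm; apply: span_gen => //; apply: (hfJA N).
apply: hKm; rewrite -[t]mulr1 e1K mulr_sumr.
apply: (sm_sum (idsm (hKid _))) => l; rewrite mulrCA.
apply: (smMr (idsm (hKid _))); last by case: (hst l).
have htauJ : forall a, L N.+1 (sJ a * tau l).
  move=> a; have hsK : K N.+1 (sJ a) by apply: span_catl; case: (hsuJ a).
  split; first by rewrite mulrC; case: (hst l) => _ hu; apply: hu.
  move=> kk hk; rewrite -mulrA; apply: (smMr hJsm); last by case: (hsuJ a).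
  by case: (hst l) => _ hu; apply: hu.
rewrite mulrC -[tau l * t]mulr1 e1J mulr_sumr; apply: A_sum => // a.
have : L N (sJ a * tau l) by apply: hIL; exists N.+1; apply: htauJ.
case=> _ /(_ t) hJt.
have : span A gJ (sJ a * tau l * t) by apply: hJt; apply: span_catr.
case: (hsuJ a) => _ hu /hu.
by rewrite [tau l * t * _]mulrC !mulrA [uJ a * sJ a]mulrC [sJ a * uJ a * tau l]mulrAC.
Qed.

Theorem theorem4p5 (B : comPzRingType) (A : set B) :
  is_subring A -> almost_Prufer A ->
  ((forall I, ideal A I -> Bregular I -> locally_principal A I -> Binvertible A I)
   <-> finite_character A).
Proof.
move=> hA hAP; split; last exact: dir_fc.
move=> hyp I hI hreg.
have [n [x [b [hx h1]]]] := (BregP I).1 hreg.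
pose gJ := map x (enum 'I_n).
have hgJ : gensin I gJ by move=> g /mapP [i _ ->].
have hgA : gensin A gJ by move=> g /hgJ; apply: idA.
have hJ : ideal A (span A gJ) by apply: span_ideal.
have hJI : span A gJ `<=` I by apply: span_sub => //; apply: idsm.
have hJreg : Bregular (span A gJ).
  apply/BregP; exists n, x, b; split => // i; apply: span_gen => //.
  by apply: map_f; rewrite mem_enum.
have hJinv := (BinvP hA hJ).1 (hAP _ hJ (span_fg hA hgA) hJreg).
apply: (@sub_finite_set _ _ [set m | maximal_ideal A m /\ span A gJ `<=` m]).
  by move=> m [hm hIm]; split => //; apply: subset_trans hIm.
apply: contrapT => hinf; exact: (main_inf hA hAP hyp hgA hJreg hJinv hinf).
Qed.
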